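(* Let $f_0(s)=\tfrac32 s^{2/3}$ and, for $t\in\mathbb C$ with $0<|t|<1$, let $f_t(s)=2^{-1/3}|t|^{2/3}\int_0^{\cosh^{-1}(s/|t|)}(\sinh 2\tau-2\tau)^{1/3}\,d\tau$ for $s\geq |t|$. Then: (1) for every $\delta\in(0,1)$ and every integer $k\geq 0$, the $k$-th derivatives $f_t^{(k)}(s)$ converge uniformly on $s\in[\delta,1]$ to $f_0^{(k)}(s)$ as $t\to 0$; (2) for every $0<\delta'<\delta<\tfrac14$ there is $\alpha_{\delta'}>0$ such that for $|t|<\alpha_{\delta'}$ and $s\in[\delta',\delta]$ one has $\tfrac12\leq f_t'(s)/f_0'(s)\leq 2$ and $\tfrac12\leq f_t''(s)/f_0''(s)\leq 2$. *)

(* Defs.v *)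
From Stdlib Require Import Reals Lra Classical ClassicalEpsilon.
Open Scope R_scope.

(* Complex numbers represented as pairs of reals; |t| is the Euclidean modulus. *)
Definition Cmod (t : R * R) : R := sqrt (fst t ^ 2 + snd t ^ 2).

(* Real cube root of a nonnegative real (0 at 0); only used on [0, +oo). *)
Definition cbrt_nonneg (x : R) : R :=
  if Rle_dec x 0 then 0 else Rpower x (1/3).

Definition arccosh (x : R) : R := ln (x + sqrt (x ^ 2 - 1)).

(* Total Riemann integral: the Riemann integral when it exists, 0 otherwise. *)
Definition Rint (f : R -> R) (a b : R) : R :=
  match excluded_middle_informative
          (exists v, exists pr : Riemann_integrable f a b, RiemannInt pr = v) with
  | left H => proj1_sig (constructive_indefinite_description _ H)
  | right _ => 0
  end.

(* Total derivative: the derivative when it exists, 0 otherwise. *)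
Definition Deriv (f : R -> R) (x : R) : R :=
  match excluded_middle_informative (exists l, derivable_pt_lim f x l) with
  | left H => proj1_sig (constructive_indefinite_description _ H)
  | right _ => 0
  end.

Fixpoint Dn (k : nat) (f : R -> R) : R -> R :=
  match k with
  | O => f
  | S k' => Deriv (Dn k' f)
  end.

Definition f0 (s : R) : R := 3/2 * Rpower s (2/3).

(* f_t(s) = 2^(-1/3) |t|^(2/3) int_0^{arccosh(s/|t|)} (sinh 2tau - 2tau)^(1/3) dtau,
   meaningful for 0 < |t| < 1 and s >= |t|. *)
Definition ft (t : R * R) (s : R) : R :=
  Rpower 2 (-(1/3)) * Rpower (Cmod t) (2/3) *
  Rint (fun tau => cbrt_nonneg (sinh (2 * tau) - 2 * tau)) 0 (arccosh (s / Cmod t)).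

(* Main.v *)
Require Import Defs.
From Stdlib Require Import Reals Lra Lia Classical ClassicalEpsilon.
Open Scope R_scope.

Lemma dpl_local f g x l d : 0 < d -> (forall y, Rabs (y - x) < d -> f y = g y) ->
  derivable_pt_lim g x l -> derivable_pt_lim f x l.
Proof.
  intros Hd Heq Hg eps Heps.
  destruct (Hg eps Heps) as [del Hdel].
  assert (Hm : 0 < Rmin del d) by (apply Rmin_pos; [apply cond_pos|lra]).
  exists (mkposreal _ Hm). intros h Hh0 Hh. simpl in Hh.
  assert (h1 : Rabs h < del) by (apply Rlt_le_trans with (1:=Hh); apply Rmin_l).
  assert (h2 : Rabs h < d) by (apply Rlt_le_trans with (1:=Hh); apply Rmin_r).
  rewrite (Heq (x+h)), (Heq x).
  - apply Hdel; auto.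
  - rewrite Rminus_diag, Rabs_R0; lra.
  - replace (x+h-x) with h by ring. exact h2.
Qed.

Lemma D_ext f g x l : (forall y, f y = g y) -> derivable_pt_lim g x l -> derivable_pt_lim f x l.
Proof. intros H; apply dpl_local with 1; [lra| intros; apply H]. Qed.

Lemma D_val f x l l' : derivable_pt_lim f x l -> l = l' -> derivable_pt_lim f x l'.
Proof. intros H ->; exact H. Qed.

Lemma Deriv_eq f x l : derivable_pt_lim f x l -> Deriv f x = l.
Proof.
  intros H. unfold Deriv. destruct excluded_middle_informative as [E|E].
  - destruct (constructive_indefinite_description _ E) as [l' Hl']. simpl.
    eapply uniqueness_limite; eauto.
  - exfalso; apply E; eauto.
Qed.

Lemma Dn_S k f : Dn (S k) f = Dn k (Deriv f).
Proof.
  induction k; [reflexivity|].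
  change (Deriv (Dn (S k) f) = Deriv (Dn k (Deriv f))). rewrite IHk; reflexivity.
Qed.

Lemma Dn_chain (U : R -> Prop) (f : R -> R) (g : nat -> R -> R) :
  (forall x, U x -> exists d, 0 < d /\ forall y, Rabs (y - x) < d -> U y) ->
  (forall x, U x -> f x = g O x) ->
  (forall n x, U x -> derivable_pt_lim (g n) x (g (S n) x)) ->
  forall k x, U x -> Dn k f x = g k x.
Proof.
  intros HU H0 HD k. induction k; intros x Hx; simpl; auto.
  apply Deriv_eq. destruct (HU x Hx) as [d [Hd Hy]].
  apply dpl_local with (g k) d; auto.
Qed.

Lemma D_plus f g x a b : derivable_pt_lim f x a -> derivable_pt_lim g x b ->
  derivable_pt_lim (fun y => f y + g y) x (a + b).
Proof. intros; apply (derivable_pt_lim_plus f g); auto. Qed.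
Lemma D_minus f g x a b : derivable_pt_lim f x a -> derivable_pt_lim g x b ->
  derivable_pt_lim (fun y => f y - g y) x (a - b).
Proof. intros; apply (derivable_pt_lim_minus f g); auto. Qed.
Lemma D_mult f g x a b : derivable_pt_lim f x a -> derivable_pt_lim g x b ->
  derivable_pt_lim (fun y => f y * g y) x (a * g x + f x * b).
Proof. intros; apply (derivable_pt_lim_mult f g); auto. Qed.
Lemma D_comp f g x a b : derivable_pt_lim f x a -> derivable_pt_lim g (f x) b ->
  derivable_pt_lim (fun y => g (f y)) x (b * a).
Proof. intros; apply (derivable_pt_lim_comp f g); auto. Qed.
Lemma D_const c x : derivable_pt_lim (fun _ => c) x 0.
Proof. apply (derivable_pt_lim_const c). Qed.
Lemma D_id x : derivable_pt_lim (fun y => y) x 1.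
Proof. apply derivable_pt_lim_id. Qed.
Lemma D_pow2 x : derivable_pt_lim (fun y => y ^ 2) x (2 * x).
Proof. apply D_val with (INR 2 * x ^ (pred 2)). apply derivable_pt_lim_pow. simpl; ring. Qed.
Lemma D_inv f x a : derivable_pt_lim f x a -> f x <> 0 ->
  derivable_pt_lim (fun y => / f y) x (- a / (f x) ^ 2).
Proof.
  intros H Hn.
  apply D_ext with (fun y => (fct_cte 1 y) / f y).
  { intros y; unfold fct_cte, Rdiv; ring. }
  apply D_val with ((0 * f x - a * fct_cte 1 x) / Rsqr (f x)).
  - apply (derivable_pt_lim_div (fct_cte 1) f); auto. apply derivable_pt_lim_const.
  - unfold fct_cte, Rsqr; field; auto.
Qed.

Inductive Ex := Cst (q:R) | SS | Rr | Ri | Cc | Ci | Add (a b:Ex) | Mul (a b:Ex).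
Definition rr ep s := sqrt (s^2 - ep^2).
Definition LL ep s := s * rr ep s - ep^2 * ln (s + rr ep s) + ep^2 * ln ep.
Definition CC ep s := Rpower (LL ep s) (1/3).
Fixpoint ev ep s x := match x with
  | Cst q => q | SS => s | Rr => rr ep s | Ri => / rr ep s
  | Cc => CC ep s | Ci => / CC ep s
  | Add a b => ev ep s a + ev ep s b | Mul a b => ev ep s a * ev ep s b end.
Fixpoint Dx x := match x with
 | Cst _ => Cst 0 | SS => Cst 1 | Rr => Mul SS Ri
 | Ri => Mul (Cst (-1)) (Mul SS (Mul Ri (Mul Ri Ri)))
 | Cc => Mul (Cst (2/3)) (Mul Rr (Mul Ci Ci))
 | Ci => Mul (Cst (-(2/3))) (Mul Rr (Mul Ci (Mul Ci (Mul Ci Ci))))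
 | Add a b => Add (Dx a) (Dx b) | Mul a b => Add (Mul (Dx a) b) (Mul a (Dx b)) end.

Lemma rr_pos ep s : ep^2 < s^2 -> 0 < rr ep s.
Proof. intros; unfold rr; apply sqrt_lt_R0; lra. Qed.
Lemma rr_sq ep s : ep^2 < s^2 -> rr ep s ^ 2 = s^2 - ep^2.
Proof. intros; unfold rr; apply pow2_sqrt; lra. Qed.

Lemma D_rr ep s : ep^2 < s^2 -> derivable_pt_lim (rr ep) s (s * / rr ep s).
Proof.
  intros H. pose proof (rr_pos _ _ H) as Hp.
  unfold rr at 1. apply D_val with (/ (2 * sqrt (s^2 - ep^2)) * (2 * s - 0)).
  - apply D_comp with (g := sqrt). apply D_minus; [apply D_pow2|apply D_const].
    apply derivable_pt_lim_sqrt; lra.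
  - fold (rr ep s). field. lra.
Qed.

Lemma D_LL ep s : 0 < s -> ep^2 < s^2 -> derivable_pt_lim (LL ep) s (2 * rr ep s).
Proof.
  intros Hs H. pose proof (rr_pos _ _ H) as Hp. pose proof (rr_sq _ _ H) as Hq.
  unfold LL at 1.
  eapply D_val.
  - apply D_plus; [apply D_minus|apply D_const].
    + apply D_mult; [apply D_id|apply D_rr; auto].
    + apply D_mult; [apply D_const|].
      apply D_comp with (g := ln); [apply D_plus; [apply D_id|apply D_rr; auto]|].
      apply derivable_pt_lim_ln; lra.
  - replace (ep^2) with (s^2 - rr ep s ^2) by (rewrite Hq; ring). assert (s + rr ep s <> 0) by lra. assert (rr ep s <> 0) by lra. field. auto.
Qed.

Lemma LL_rpow L : Rpower L (1/3 - 1) = / Rpower L (1/3) * / Rpower L (1/3).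
Proof. unfold Rpower. rewrite <- !exp_Ropp, <- exp_plus. f_equal. field. Qed.

Lemma CC_pos ep s : 0 < CC ep s.
Proof. unfold CC, Rpower; apply exp_pos. Qed.

Lemma D_CC ep s : 0 < s -> ep^2 < s^2 -> 0 < LL ep s ->
  derivable_pt_lim (CC ep) s (2/3 * (rr ep s * (/ CC ep s * / CC ep s))).
Proof.
  intros Hs H HL. unfold CC at 1.
  eapply D_val.
  - apply D_comp with (g := fun x => Rpower x (1/3)); [apply D_LL; auto|].
    apply derivable_pt_lim_power; auto.
  - rewrite LL_rpow. fold (CC ep s). field. pose proof (CC_pos ep s); lra.
Qed.

Lemma ev_deriv ep s x : 0 < s -> ep^2 < s^2 -> 0 < LL ep s ->
  derivable_pt_lim (fun y => ev ep y x) s (ev ep s (Dx x)).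
Proof.
  intros Hs H HL. pose proof (rr_pos _ _ H) as Hp. pose proof (CC_pos ep s) as Hc.
  induction x; simpl.
  - apply D_const.
  - apply D_id.
  - apply D_rr; auto.
  - eapply D_val; [apply D_inv; [apply D_rr; auto| lra]|]. field; lra.
  - apply D_CC; auto.
  - eapply D_val; [apply D_inv; [apply D_CC; auto| lra]|]. field; lra.
  - apply D_plus; auto.
  - apply D_mult; auto.
Qed.

Definition UCf dl (F : R -> R -> R) (G : R -> R) := forall eps, 0 < eps ->
  exists eta, 0 < eta /\ forall ep s, 0 < ep < eta -> dl <= s <= 1 -> Rabs (F ep s - G s) < eps.
Definition BDf dl (G : R -> R) := exists M, 0 <= M /\ forall s, dl <= s <= 1 -> Rabs (G s) <= M.

Lemma UCf_plus dl F1 G1 F2 G2 : UCf dl F1 G1 -> UCf dl F2 G2 ->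
  UCf dl (fun ep s => F1 ep s + F2 ep s) (fun s => G1 s + G2 s).
Proof.
  intros H1 H2 eps Heps.
  destruct (H1 (eps/2)) as [e1 [He1 P1]]; [lra|].
  destruct (H2 (eps/2)) as [e2 [He2 P2]]; [lra|].
  exists (Rmin e1 e2); split; [apply Rmin_pos; auto|].
  intros ep s Hep Hs.
  assert (ep < e1) by (apply Rlt_le_trans with (Rmin e1 e2); [lra|apply Rmin_l]).
  assert (ep < e2) by (apply Rlt_le_trans with (Rmin e1 e2); [lra|apply Rmin_r]).
  specialize (P1 ep s ltac:(lra) Hs). specialize (P2 ep s ltac:(lra) Hs).
  replace (F1 ep s + F2 ep s - (G1 s + G2 s)) with ((F1 ep s - G1 s) + (F2 ep s - G2 s)) by ring.
  eapply Rle_lt_trans; [apply Rabs_triang|lra].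
Qed.

Lemma UCf_mult dl F1 G1 F2 G2 : UCf dl F1 G1 -> UCf dl F2 G2 -> BDf dl G1 -> BDf dl G2 ->
  UCf dl (fun ep s => F1 ep s * F2 ep s) (fun s => G1 s * G2 s).
Proof.
  intros H1 H2 [M1 [HM1 B1]] [M2 [HM2 B2]] eps Heps.
  destruct (H1 (eps/(2*(M2+1)))) as [e1 [He1 P1]].
  { apply Rdiv_lt_0_compat; lra. }
  destruct (H2 (Rmin 1 (eps/(2*(M1+1))))) as [e2 [He2 P2]].
  { apply Rmin_pos; [lra| apply Rdiv_lt_0_compat; lra]. }
  exists (Rmin e1 e2); split; [apply Rmin_pos; auto|].
  intros ep s Hep Hs.
  assert (ep < e1) by (apply Rlt_le_trans with (Rmin e1 e2); [lra|apply Rmin_l]).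
  assert (ep < e2) by (apply Rlt_le_trans with (Rmin e1 e2); [lra|apply Rmin_r]).
  specialize (P1 ep s ltac:(lra) Hs). specialize (P2 ep s ltac:(lra) Hs).
  specialize (B1 s Hs). specialize (B2 s Hs).
  pose proof (Rmin_l 1 (eps/(2*(M1+1)))). pose proof (Rmin_r 1 (eps/(2*(M1+1)))).
  set (a := F1 ep s - G1 s) in *. set (b := F2 ep s - G2 s) in *.
  replace (F1 ep s * F2 ep s - G1 s * G2 s) with (a * F2 ep s + G1 s * b) by (unfold a, b; ring).
  assert (HF2 : Rabs (F2 ep s) <= M2 + 1).
  { replace (F2 ep s) with (G2 s + b) by (unfold b; ring).
    eapply Rle_trans; [apply Rabs_triang|lra]. }
  eapply Rle_lt_trans; [apply Rabs_triang|]. rewrite !Rabs_mult.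
  assert (Rabs a * Rabs (F2 ep s) <= eps/(2*(M2+1)) * (M2+1)).
  { apply Rmult_le_compat; try apply Rabs_pos; lra. }
  assert (Rabs (G1 s) * Rabs b <= M1 * (eps/(2*(M1+1)))).
  { apply Rmult_le_compat; try apply Rabs_pos; lra. }
  assert (eps/(2*(M2+1)) * (M2+1) = eps/2) by (field; lra).
  assert (M1 * (eps/(2*(M1+1))) < eps/2).
  { replace (M1 * (eps/(2*(M1+1)))) with (eps/2 * (M1 / (M1+1))) by (field; lra).
    assert (M1/(M1+1) < 1) by (apply Rmult_lt_reg_r with (M1+1); [lra|]; field_simplify; lra).
    nra. }
  lra.
Qed.

Lemma UCf_inv dl F G m : 0 < m -> UCf dl F G -> (forall s, dl <= s <= 1 -> m <= Rabs (G s)) ->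
  UCf dl (fun ep s => / F ep s) (fun s => / G s).
Proof.
  intros Hm H HG eps Heps.
  destruct (H (Rmin (m/2) (eps * (m*m/2)))) as [e1 [He1 P1]].
  { apply Rmin_pos; [lra| apply Rmult_lt_0_compat; nra]. }
  exists e1; split; auto. intros ep s Hep Hs.
  specialize (P1 ep s Hep Hs). specialize (HG s Hs).
  pose proof (Rmin_l (m/2) (eps * (m*m/2))). pose proof (Rmin_r (m/2) (eps * (m*m/2))).
  assert (HF : m/2 <= Rabs (F ep s)).
  { pose proof (Rabs_triang_inv (G s) (G s - F ep s)).
    replace (G s - (G s - F ep s)) with (F ep s) in H2 by ring.
    rewrite Rabs_minus_sym in H2. lra. }
  assert (F ep s <> 0) by (intro E; rewrite E, Rabs_R0 in HF; lra).
  assert (G s <> 0) by (intro E; rewrite E, Rabs_R0 in HG; lra).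
  replace (/ F ep s - / G s) with ((G s - F ep s) * / (F ep s * G s)) by (field; auto).
  rewrite Rabs_mult, Rabs_inv, Rabs_mult, Rabs_minus_sym.
  apply Rmult_lt_reg_r with (Rabs (F ep s) * Rabs (G s)).
  { apply Rmult_lt_0_compat; lra. }
  rewrite Rmult_assoc, Rinv_l by (apply Rmult_integral_contrapositive; split; apply Rabs_no_R0; auto).
  rewrite Rmult_1_r.
  assert (m/2 * m <= Rabs (F ep s) * Rabs (G s)) by (apply Rmult_le_compat; lra).
  nra.
Qed.

Lemma cube_rpow x : 0 < x -> Rpower x (1/3) ^ 3 = x.
Proof.
  intros Hx. rewrite <- Rpower_pow by (unfold Rpower; apply exp_pos).
  rewrite Rpower_mult. replace (1/3 * INR 3) with 1 by (simpl; field). apply Rpower_1; auto.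
Qed.

Lemma UCf_cbrt dl F G m : 0 < m -> UCf dl F G -> (forall s, dl <= s <= 1 -> m <= G s) ->
  UCf dl (fun ep s => Rpower (F ep s) (1/3)) (fun s => Rpower (G s) (1/3)).
Proof.
  intros Hm H HG eps Heps.
  set (c := Rpower m (1/3)).
  assert (Hc : 0 < c) by (unfold c, Rpower; apply exp_pos).
  destruct (H (Rmin (m/2) (eps * (c*c)))) as [e1 [He1 P1]].
  { apply Rmin_pos; [lra| apply Rmult_lt_0_compat; nra]. }
  exists e1; split; auto. intros ep s Hep Hs.
  specialize (P1 ep s Hep Hs). specialize (HG s Hs).
  pose proof (Rmin_l (m/2) (eps * (c*c))). pose proof (Rmin_r (m/2) (eps * (c*c))).
  assert (HF : 0 < F ep s) by (apply Rabs_def2 in P1; lra).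
  set (a := Rpower (F ep s) (1/3)). set (b := Rpower (G s) (1/3)).
  assert (Ha : 0 < a) by (unfold a, Rpower; apply exp_pos).
  assert (Hb : c <= b) by (apply Rle_Rpower_l; lra).
  assert (E : F ep s - G s = (a - b) * (a*a + a*b + b*b)).
  { unfold a, b. rewrite <- (cube_rpow (F ep s)) at 1 by auto.
    rewrite <- (cube_rpow (G s)) at 1 by lra. ring. }
  rewrite E, Rabs_mult in P1.
  rewrite (Rabs_right (a*a+a*b+b*b)) in P1 by nra.
  assert (c*c <= a*a+a*b+b*b) by nra.
  assert (Rabs (a - b) * (c*c) <= Rabs (a - b) * (a*a+a*b+b*b)).
  { apply Rmult_le_compat_l; [apply Rabs_pos|auto]. }
  nra.
Qed.

Lemma UCf_const dl c : UCf dl (fun _ _ => c) (fun _ => c).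
Proof. intros eps He; exists 1; split; [lra|]; intros; rewrite Rminus_diag, Rabs_R0; lra. Qed.
Lemma UCf_id dl : UCf dl (fun _ s => s) (fun s => s).
Proof. intros eps He; exists 1; split; [lra|]; intros; rewrite Rminus_diag, Rabs_R0; lra. Qed.
Lemma UCf_ext dl F G F' G' : UCf dl F G -> (forall ep s, 0 < ep -> dl <= s <= 1 -> F ep s = F' ep s) ->
  (forall s, dl <= s <= 1 -> G s = G' s) -> UCf dl F' G'.
Proof.
  intros H HF HG eps He. destruct (H eps He) as [e [He' P]]. exists e; split; auto.
  intros ep s Hep Hs. rewrite <- HF, <- HG by (auto; lra). auto.
Qed.

Lemma rr0 s : 0 < s -> rr 0 s = s.
Proof. intros; unfold rr; replace (s^2 - 0^2) with (s^2) by ring; apply sqrt_pow2; lra. Qed.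
Lemma LL0 s : 0 < s -> LL 0 s = s^2.
Proof. intros; unfold LL; rewrite rr0 by auto; ring. Qed.
Lemma CC0 s : 0 < s -> CC 0 s = Rpower (s^2) (1/3).
Proof. intros; unfold CC; rewrite LL0 by auto; reflexivity. Qed.

Lemma UC_rr dl : 0 < dl <= 1 -> UCf dl rr (fun s => s).
Proof.
  intros Hd eps He.
  exists (Rmin 1 (Rmin (dl/2) (eps*dl))). split.
  { repeat apply Rmin_pos; nra. }
  intros ep s Hep Hs.
  pose proof (Rmin_l 1 (Rmin (dl/2) (eps*dl))). pose proof (Rmin_r 1 (Rmin (dl/2) (eps*dl))).
  pose proof (Rmin_l (dl/2) (eps*dl)). pose proof (Rmin_r (dl/2) (eps*dl)).
  assert (Hsq : ep^2 < s^2) by nra.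
  pose proof (rr_sq _ _ Hsq). pose proof (rr_pos _ _ Hsq).
  assert (rr ep s <= s) by nra.
  rewrite Rabs_left1 by lra.
  assert ((s - rr ep s) * dl <= (s - rr ep s) * (s + rr ep s)) by nra.
  nra.
Qed.

Lemma ln2_lt1 : ln 2 < 1.
Proof.
  rewrite <- (ln_exp 1). apply ln_increasing; [lra|].
  pose proof (exp_ineq1 1); lra.
Qed.

Lemma ln_le' x y : 0 < x -> x <= y -> ln x <= ln y.
Proof. intros; destruct (Req_dec x y); [subst; lra|left; apply ln_increasing; lra]. Qed.

Lemma eplnep ep : 0 < ep < 1 -> Rabs (ep^2 * ln ep) <= ep.
Proof.
  intros H. assert (ln ep < 0) by (rewrite <- ln_1; apply ln_increasing; lra).
  pose proof (exp_ineq1_le (ln (/ ep))). rewrite exp_ln in H1 by (apply Rinv_0_lt_compat; lra).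
  rewrite ln_Rinv in H1 by lra.
  rewrite Rabs_left1 by nra.
  assert (ep * (- ln ep) <= ep * (/ep - 1)) by (apply Rmult_le_compat_l; lra).
  assert (ep * / ep = 1) by (field; lra). nra.
Qed.

Lemma UC_LL dl : 0 < dl <= 1 -> UCf dl LL (fun s => s^2).
Proof.
  intros Hd eps He.
  set (K := 1 + Rabs (ln dl)).
  assert (HK : 0 < K) by (unfold K; pose proof (Rabs_pos (ln dl)); lra).
  destruct (UC_rr dl Hd (eps/3)) as [e1 [He1 P1]]; [lra|].
  exists (Rmin (Rmin 1 (dl/2)) (Rmin e1 (eps/(3*K+3)))). split.
  { repeat apply Rmin_pos; try lra. apply Rdiv_lt_0_compat; lra. }
  intros ep s Hep Hs.
  pose proof (Rmin_l (Rmin 1 (dl/2)) (Rmin e1 (eps/(3*K+3)))).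
  pose proof (Rmin_r (Rmin 1 (dl/2)) (Rmin e1 (eps/(3*K+3)))).
  pose proof (Rmin_l 1 (dl/2)). pose proof (Rmin_r 1 (dl/2)).
  pose proof (Rmin_l e1 (eps/(3*K+3))). pose proof (Rmin_r e1 (eps/(3*K+3))).
  assert (Hsq : ep^2 < s^2) by nra.
  pose proof (rr_sq _ _ Hsq). pose proof (rr_pos _ _ Hsq).
  assert (rr ep s <= s) by nra.
  specialize (P1 ep s ltac:(lra) Hs).
  assert (HL : Rabs (ln (s + rr ep s)) <= K).
  { unfold K. assert (ln dl <= ln (s + rr ep s)) by (apply ln_le'; lra).
    assert (ln (s + rr ep s) <= ln 2) by (apply ln_le'; lra).
    pose proof ln2_lt1. apply Rabs_le. split.
    - pose proof (Rabs_pos (ln dl)). pose proof (Rle_abs (- ln dl)) as Hq. rewrite Rabs_Ropp in Hq. lra.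
    - pose proof (Rabs_pos (ln dl)). lra. }
  pose proof (eplnep ep ltac:(lra)) as HE.
  unfold LL.
  replace (s * rr ep s - ep ^ 2 * ln (s + rr ep s) + ep ^ 2 * ln ep - s ^ 2)
    with (s * (rr ep s - s) + (- (ep^2 * ln (s + rr ep s)) + ep^2 * ln ep)) by ring.
  eapply Rle_lt_trans; [apply Rabs_triang|].
  eapply Rle_lt_trans; [apply Rplus_le_compat_l; apply Rabs_triang|].
  rewrite Rabs_Ropp, !Rabs_mult, (Rabs_right s) by lra.
  rewrite (Rabs_right (ep^2)) by nra.
  assert (s * Rabs (rr ep s - s) <= Rabs (rr ep s - s)).
  { pose proof (Rabs_pos (rr ep s - s)). nra. }
  assert (ep^2 * Rabs (ln (s + rr ep s)) <= ep * K).
  { pose proof (Rabs_pos (ln (s + rr ep s))). assert (ep^2 <= ep) by nra. nra. }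
  assert (ep * K < eps/3).
  { assert (ep * (3*K+3) < eps).
    { apply Rlt_le_trans with (eps/(3*K+3) * (3*K+3)); [apply Rmult_lt_compat_r; lra|].
      right; field; lra. }
    lra. }
  assert (ep < eps/3).
  { assert (ep * (3*K+3) < eps).
    { apply Rlt_le_trans with (eps/(3*K+3) * (3*K+3)); [apply Rmult_lt_compat_r; lra|].
      right; field; lra. }
    nra. }
  rewrite Rabs_mult, (Rabs_right (ep^2)) in HE by nra. lra.
Qed.

Lemma UC_ev dl x : 0 < dl <= 1 ->
  UCf dl (fun ep s => ev ep s x) (fun s => ev 0 s x) /\ BDf dl (fun s => ev 0 s x).
Proof.
  intros Hd.
  set (c := Rpower (dl^2) (1/3)).
  assert (Hc : 0 < c) by (unfold c, Rpower; apply exp_pos).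
  assert (UCr : UCf dl rr (rr 0)).
  { apply UCf_ext with rr (fun s => s); auto. apply UC_rr; auto.
    intros; rewrite rr0; lra. }
  assert (UCc : UCf dl CC (CC 0)).
  { apply UCf_ext with (fun ep s => Rpower (LL ep s) (1/3)) (fun s => Rpower (s^2) (1/3)); auto.
    - apply UCf_cbrt with (dl^2); [nra| apply UC_LL; auto|]. intros; nra.
    - intros; rewrite CC0; auto; lra. }
  assert (Cb : forall s, dl <= s <= 1 -> c <= CC 0 s <= 1).
  { intros s Hs. rewrite CC0 by lra. split.
    - apply Rle_Rpower_l; nra.
    - replace 1 with (Rpower 1 (1/3)) at 2 by (unfold Rpower; rewrite ln_1, Rmult_0_r, exp_0; auto).
      apply Rle_Rpower_l; nra. }
  induction x; simpl.
  - split; [apply UCf_const|]. exists (Rabs q); split; [apply Rabs_pos|intros; lra].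
  - split; [apply UCf_id|]. exists 1; split; [lra|intros; rewrite Rabs_right; lra].
  - split; [exact UCr|]. exists 1; split; [lra|intros; rewrite rr0, Rabs_right; lra].
  - split.
    + apply (UCf_inv dl rr (rr 0) dl); [lra|exact UCr|]. intros; rewrite rr0, Rabs_right; lra.
    + exists (/dl); split; [left; apply Rinv_0_lt_compat; lra|].
      intros s Hs; rewrite rr0, Rabs_right by (try apply Rle_ge, Rlt_le, Rinv_0_lt_compat; lra).
      apply Rinv_le_contravar; lra.
  - split; [exact UCc|]. exists 1; split; [lra|]. intros s Hs; specialize (Cb s Hs).
    rewrite Rabs_right; lra.
  - split.
    + apply (UCf_inv dl CC (CC 0) c); [lra|exact UCc|]. intros s Hs; specialize (Cb s Hs).
      rewrite Rabs_right; lra.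
    + exists (/c); split; [left; apply Rinv_0_lt_compat; lra|].
      intros s Hs; specialize (Cb s Hs).
      rewrite Rabs_right by (apply Rle_ge, Rlt_le, Rinv_0_lt_compat; lra).
      apply Rinv_le_contravar; lra.
  - destruct IHx1 as [U1 [M1 [HM1 B1]]]; destruct IHx2 as [U2 [M2 [HM2 B2]]].
    split; [apply UCf_plus; auto|].
    exists (M1 + M2); split; [lra|]. intros s Hs.
    eapply Rle_trans; [apply Rabs_triang|]. specialize (B1 s Hs); specialize (B2 s Hs); lra.
  - destruct IHx1 as [U1 B1]; destruct IHx2 as [U2 B2].
    split; [apply UCf_mult; auto|].
    destruct B1 as [M1 [HM1 B1]]; destruct B2 as [M2 [HM2 B2]].
    exists (M1 * M2); split; [nra|]. intros s Hs. rewrite Rabs_mult.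
    specialize (B1 s Hs); specialize (B2 s Hs).
    apply Rmult_le_compat; auto; apply Rabs_pos.
Qed.

Lemma dcont f x l : derivable_pt_lim f x l -> continuity_pt f x.
Proof. intros H; exact (derivable_continuous_pt f x (exist _ l H)). Qed.

Lemma cbrt_cont x : continuity_pt cbrt_nonneg x.
Proof.
  destruct (Rtotal_order x 0) as [Hx|[Hx|Hx]].
  - apply continuity_pt_locally_ext with (fun _ => 0) (-x); [lra| |].
    + intros y Hy. unfold Rdist in Hy. apply Rabs_def2 in Hy.
      unfold cbrt_nonneg; destruct Rle_dec; lra.
    + apply continuity_pt_const. intros a b; auto.
  - subst. intros eps He. exists (Rmin 1 (eps^3)). split.
    { apply Rlt_gt, Rmin_pos; [lra| apply pow_lt; lra]. }
    intros y [_ Hy]. change (Rdist y 0 < Rmin 1 (eps^3)) in Hy. change (Rdist (cbrt_nonneg y) (cbrt_nonneg 0) < eps). unfold Rdist in *.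
    pose proof (Rmin_l 1 (eps^3)). pose proof (Rmin_r 1 (eps^3)).
    unfold cbrt_nonneg. destruct (Rle_dec 0 0) as [_|n]; [|lra].
    destruct (Rle_dec y 0).
    + rewrite Rminus_diag, Rabs_R0; lra.
    + rewrite !Rminus_0_r in *.
      rewrite (Rabs_right y) in Hy by lra.
      rewrite Rabs_right by (unfold Rpower; apply Rle_ge, Rlt_le, exp_pos).
      replace eps with (Rpower (eps^3) (1/3)).
      * apply Rlt_Rpower_l; lra.
      * rewrite <- Rpower_pow by lra. rewrite Rpower_mult.
        replace (INR 3 * (1/3)) with 1 by (simpl; field). apply Rpower_1; lra.
  - apply continuity_pt_locally_ext with (fun y => Rpower y (1/3)) x; [lra| |].
    + intros y Hy. unfold Rdist in Hy. apply Rabs_def2 in Hy.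
      unfold cbrt_nonneg; destruct Rle_dec; lra.
    + eapply dcont. apply derivable_pt_lim_power; auto.
Qed.

Definition sh t := sinh (2 * t) - 2 * t.
Definition phi t := cbrt_nonneg (sh t).

Lemma phi_cont x : continuity_pt phi x.
Proof.
  change (continuity_pt (comp cbrt_nonneg sh) x).
  apply continuity_pt_comp; [|apply cbrt_cont].
  eapply dcont. unfold sh. apply D_minus.
  - apply D_comp with (g := sinh); [apply D_mult; [apply D_const|apply D_id]|apply derivable_pt_lim_sinh].
  - apply D_mult; [apply D_const|apply D_id].
Qed.

Lemma Rint_eq f a b (pr : Riemann_integrable f a b) : Rint f a b = RiemannInt pr.
Proof.
  unfold Rint. destruct excluded_middle_informative as [E|E].
  - destruct (constructive_indefinite_description _ E) as [v [pr' Hv]]. simpl.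
    rewrite <- Hv. apply RiemannInt_P5.
  - exfalso; apply E. exists (RiemannInt pr), pr; reflexivity.
Qed.

Lemma cont_int f a b : (forall x, continuity_pt f x) -> Riemann_integrable f a b.
Proof.
  intros H. destruct (Rle_dec a b).
  - apply continuity_implies_RiemannInt; auto.
  - apply RiemannInt_P1. apply continuity_implies_RiemannInt; auto; lra.
Qed.

Lemma D_Rint f x : (forall y, continuity_pt f y) -> derivable_pt_lim (fun y => Rint f 0 y) x (f x).
Proof.
  intros Hc.
  assert (h : x - 1 <= x + 1) by lra.
  assert (C0 : forall y, x - 1 <= y <= x + 1 -> continuity_pt f y) by auto.
  pose proof (@RiemannInt_P27 f (x-1) (x+1) x h C0 ltac:(lra)) as HP.
  set (P := primitive h (FTC_P1 h C0)) in *.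
  set (pr0 := cont_int f 0 (x-1) Hc).
  apply dpl_local with (fun y => RiemannInt pr0 + P y) 1; [lra| |].
  - intros y Hy. apply Rabs_def2 in Hy.
    rewrite (Rint_eq f 0 y (cont_int f 0 y Hc)).
    unfold P, primitive. destruct (Rle_dec (x-1) y); [|lra]. destruct (Rle_dec y (x+1)); [|lra].
    symmetry. apply RiemannInt_P26.
  - eapply D_val; [apply D_plus; [apply D_const|exact HP]|ring].
Qed.

Definition G y := Rint phi 0 y.
Lemma D_G x : derivable_pt_lim G x (phi x).
Proof. apply D_Rint, phi_cont. Qed.

Section FT.
Variable ep : R.
Hypothesis Hep : 0 < ep.

Lemma q_eq s : ep < s -> sqrt ((s/ep)^2 - 1) = rr ep s / ep.
Proof.
  intros Hs. assert (Hsq : ep^2 < s^2) by nra.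
  pose proof (rr_sq _ _ Hsq) as Hq. pose proof (rr_pos _ _ Hsq).
  replace ((s/ep)^2 - 1) with ((rr ep s / ep)^2).
  - apply sqrt_pow2. apply Rlt_le, Rdiv_lt_0_compat; auto.
  - unfold Rdiv. rewrite Rpow_mult_distr, Hq. field. lra.
Qed.

Lemma acosh_eq s : ep < s -> arccosh (s/ep) = ln (s + rr ep s) - ln ep.
Proof.
  intros Hs. assert (Hsq : ep^2 < s^2) by nra. pose proof (rr_pos _ _ Hsq).
  unfold arccosh. rewrite q_eq by auto.
  replace (s/ep + rr ep s/ep) with ((s + rr ep s) * / ep) by (field; lra).
  rewrite ln_mult, ln_Rinv; try lra. apply Rinv_0_lt_compat; lra.
Qed.

Lemma D_acosh s : ep < s -> derivable_pt_lim (fun y => arccosh (y/ep)) s (/ rr ep s).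
Proof.
  intros Hs. assert (Hsq : ep^2 < s^2) by nra. pose proof (rr_pos _ _ Hsq).
  assert (Hx : 1 < s/ep) by (apply Rmult_lt_reg_r with ep; [lra|]; field_simplify; lra).
  assert (Hx2 : 0 < (s/ep)^2 - 1) by nra.
  unfold arccosh. eapply D_val.
  - apply D_comp with (g := ln).
    + apply D_plus.
      * apply D_mult; [apply D_id|apply D_const].
      * apply D_comp with (g := sqrt).
        -- apply D_minus; [|apply D_const].
           apply D_comp with (g := fun z => z^2); [apply D_mult; [apply D_id|apply D_const]|apply D_pow2].
        -- apply derivable_pt_lim_sqrt; auto.
    + apply derivable_pt_lim_ln. pose proof (sqrt_pos ((s/ep)^2 - 1)). lra.
  - cbv beta. rewrite q_eq by auto. field. split; [lra|]. split; [lra|].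
    intro E. assert (s/ep + rr ep s / ep > 0); [|lra].
    apply Rplus_lt_0_compat; apply Rdiv_lt_0_compat; lra.
Qed.

Lemma sh_acosh s : ep < s -> sh (arccosh (s/ep)) = 2 * LL ep s / ep^2.
Proof.
  intros Hs. assert (Hsq : ep^2 < s^2) by nra. pose proof (rr_pos _ _ Hsq).
  pose proof (rr_sq _ _ Hsq) as Hq.
  assert (Hy : arccosh (s/ep) = ln ((s + rr ep s) / ep)).
  { rewrite acosh_eq by auto. unfold Rdiv. rewrite ln_mult, ln_Rinv; try lra.
    apply Rinv_0_lt_compat; lra. }
  set (y := (s + rr ep s) / ep) in *.
  assert (Hyp : 0 < y) by (apply Rdiv_lt_0_compat; lra).
  assert (E1 : exp (2 * ln y) = y * y).
  { replace (2 * ln y) with (ln y + ln y) by ring. rewrite exp_plus, exp_ln; auto. }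
  assert (E2 : exp (- (2 * ln y)) = (s - rr ep s)^2 / ep^2).
  { rewrite exp_Ropp, E1.
    assert (Hp : (s - rr ep s)^2 / ep^2 * (y * y) = 1).
    { replace ((s - rr ep s)^2 / ep^2 * (y * y)) with (((s + rr ep s)*(s - rr ep s))^2 / (ep^2 * ep^2))
        by (unfold y; field; lra).
      replace ((s + rr ep s)*(s - rr ep s)) with (ep^2) by nra. field; lra. }
    replace (/ (y * y)) with ((s - rr ep s)^2 / ep^2 * (y * y) * / (y * y)) by (rewrite Hp; ring).
    field. nra. }
  unfold sh, sinh. rewrite Hy, E1, E2.
  assert (Hl : ln y = ln (s + rr ep s) - ln ep).
  { unfold y, Rdiv. rewrite ln_mult, ln_Rinv; try lra. apply Rinv_0_lt_compat; lra. }
  rewrite Hl. unfold LL, y. field_simplify; try lra. field. lra.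
Qed.

Lemma phi_acosh s : ep < s -> 0 < LL ep s -> phi (arccosh (s/ep)) = Rpower (2 * LL ep s / ep^2) (1/3).
Proof.
  intros Hs HL. unfold phi. rewrite sh_acosh by auto. unfold cbrt_nonneg.
  destruct Rle_dec as [r|]; [|reflexivity].
  exfalso. assert (0 < 2 * LL ep s / ep^2) by (apply Rdiv_lt_0_compat; nra). lra.
Qed.

Lemma K_eq s : 0 < LL ep s ->
  Rpower 2 (-(1/3)) * Rpower ep (2/3) * Rpower (2 * LL ep s / ep^2) (1/3) = CC ep s.
Proof.
  intros HL. unfold CC, Rpower. rewrite <- !exp_plus. f_equal.
  unfold Rdiv. rewrite ln_mult, ln_mult, ln_Rinv, ln_pow; try lra; try nra.
  all: try (simpl INR; field).
  all: try (apply Rinv_0_lt_compat; nra).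
  all: try (apply Rmult_lt_0_compat; lra).
Qed.
End FT.

Lemma ft_eq t s : ft t s = Rpower 2 (-(1/3)) * Rpower (Cmod t) (2/3) * G (arccosh (s / Cmod t)).
Proof. reflexivity. Qed.

Lemma D_ft t s : 0 < Cmod t -> Cmod t < s -> 0 < LL (Cmod t) s ->
  derivable_pt_lim (ft t) s (CC (Cmod t) s * / rr (Cmod t) s).
Proof.
  intros He Hs HL. set (ep := Cmod t) in *.
  apply D_ext with (fun y => Rpower 2 (-(1/3)) * Rpower ep (2/3) * G (arccosh (y / ep))).
  { intros; apply ft_eq. }
  eapply D_val.
  - apply D_mult; [apply D_const|]. apply D_comp with (g := G); [apply D_acosh; auto|apply D_G].
  - rewrite phi_acosh by auto. rewrite <- (K_eq ep He s HL). ring.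
Qed.


Definition e1 := Mul Cc Ri.
Definition iterD n := Nat.iter n Dx e1.

Lemma G0 : G 0 = 0.
Proof. unfold G. rewrite (Rint_eq _ _ _ (RiemannInt_P7 phi 0)). apply RiemannInt_P9. Qed.

Lemma phi_nonneg x : 0 <= phi x.
Proof. unfold phi, cbrt_nonneg. destruct Rle_dec; [lra|unfold Rpower; left; apply exp_pos]. Qed.

Lemma G_nonneg T : 0 <= T -> 0 <= G T.
Proof.
  intros HT. destruct HT as [HT|<-]; [|rewrite G0; lra].
  destruct (MVT_cor2 G phi 0 T HT (fun c _ => D_G c)) as [c [Hc _]].
  rewrite G0 in Hc. pose proof (phi_nonneg c). nra.
Qed.

Definition psi t := Rpower 2 (-(1/3)) * exp (2/3 * t).
Definition H t := Rpower 2 (-(1/3)) * (3/2) * (exp (2/3 * t) - 1).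

Lemma phi_le_psi t : 0 <= t -> phi t <= psi t.
Proof.
  intros Ht. unfold phi, cbrt_nonneg. destruct Rle_dec.
  - unfold psi, Rpower. pose proof (exp_pos (-(1/3) * ln 2)). pose proof (exp_pos (2/3*t)). nra.
  - assert (sh t <= exp (2*t) / 2).
    { unfold sh, sinh. pose proof (exp_pos (-(2*t))). lra. }
    apply Rle_trans with (Rpower (exp (2*t)/2) (1/3)).
    + apply Rle_Rpower_l; lra.
    + right. unfold psi, Rpower. rewrite <- exp_plus. f_equal.
      change (exp (2*t) / 2) with (exp (2*t) * / 2). rewrite ln_mult, ln_exp, ln_Rinv; try lra; try apply exp_pos; try (apply Rinv_0_lt_compat; lra).
Qed.

Lemma D_H t : derivable_pt_lim H t (psi t).
Proof.
  unfold H. eapply D_val.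
  - apply D_mult; [apply D_const|]. apply D_minus; [|apply D_const].
    apply D_comp with (g := exp); [apply D_mult; [apply D_const|apply D_id]|apply derivable_pt_lim_exp].
  - unfold psi. field.
Qed.

Lemma G_le_H T : 0 <= T -> G T <= H T.
Proof.
  intros HT. destruct HT as [HT|<-].
  2:{ rewrite G0. unfold H. rewrite Rmult_0_r, exp_0. lra. }
  destruct (MVT_cor2 (fun x => H x - G x) (fun x => psi x - phi x) 0 T HT) as [c [Hc Hc2]].
  { intros c _. apply D_minus; [apply D_H|apply D_G]. }
  rewrite G0 in Hc. unfold H at 2 in Hc. rewrite Rmult_0_r, exp_0 in Hc.
  pose proof (phi_le_psi c ltac:(lra)). nra.
Qed.

Lemma ft_le_f0 t s : 0 < Cmod t -> Cmod t < s -> ft t s <= f0 s.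
Proof.
  intros He Hs. rewrite ft_eq. set (ep := Cmod t) in *.
  assert (Hsq : ep^2 < s^2) by nra. pose proof (rr_pos _ _ Hsq).
  pose proof (acosh_eq ep He s Hs) as HA.
  set (T := arccosh (s/ep)) in *.
  assert (HT : 0 <= T).
  { rewrite HA. assert (ln ep <= ln (s + rr ep s)) by (apply ln_le'; lra). lra. }
  set (Kp := Rpower 2 (-(1/3)) * Rpower ep (2/3)).
  assert (HKp : 0 < Kp) by (unfold Kp, Rpower; apply Rmult_lt_0_compat; apply exp_pos).
  apply Rle_trans with (Kp * (Rpower 2 (-(1/3)) * (3/2) * exp (2/3 * T))).
  { apply Rmult_le_compat_l; [lra|]. apply Rle_trans with (H T); [apply G_le_H; auto|].
    unfold H. unfold Rpower; pose proof (exp_pos (-(1/3) * ln 2)). nra. }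
  replace (Kp * (Rpower 2 (-(1/3)) * (3/2) * exp (2/3 * T))) with (3/2 * Rpower ((s + rr ep s)/2) (2/3)).
  - unfold f0. apply Rmult_le_compat_l; [lra|]. apply Rle_Rpower_l; [lra|]. split.
    + apply Rdiv_lt_0_compat; lra.
    + assert (rr ep s <= s) by (pose proof (rr_sq _ _ Hsq); nra). lra.
  - unfold Kp, Rpower. rewrite HA.
    match goal with |- _ = exp ?a * exp ?b * (exp ?c * ?k * exp ?d) =>
      replace (exp a * exp b * (exp c * k * exp d)) with (k * exp (a + b + c + d)) by (rewrite !exp_plus; ring) end.
    f_equal. f_equal.
    replace ((s + rr ep s) / 2) with ((s + rr ep s) * / 2) by reflexivity.
    rewrite ln_mult, ln_Rinv by lra. field.
Qed.


Lemma ft_nonneg t s : 0 < Cmod t -> Cmod t < s -> 0 <= ft t s.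
Proof.
  intros He Hs. rewrite ft_eq. set (ep := Cmod t) in *.
  assert (Hsq : ep^2 < s^2) by nra. pose proof (rr_pos _ _ Hsq).
  pose proof (acosh_eq ep He s Hs) as HA.
  assert (HT : 0 <= arccosh (s/ep)).
  { rewrite HA. assert (ln ep <= ln (s + rr ep s)) by (apply ln_le'; lra). lra. }
  apply Rmult_le_pos; [|apply G_nonneg; auto].
  unfold Rpower. apply Rmult_le_pos; left; apply exp_pos.
Qed.

Lemma D_f0 x : 0 < x -> derivable_pt_lim f0 x (ev 0 x e1).
Proof.
  intros Hx. simpl. rewrite CC0, rr0 by auto. unfold f0.
  eapply D_val.
  - apply D_mult; [apply D_const|]. apply derivable_pt_lim_power; auto.
  - replace (/x) with (exp (- ln x)) by (rewrite exp_Ropp, exp_ln; auto).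
    unfold Rpower. rewrite ln_pow by auto. rewrite <- exp_plus.
    replace (0 * exp (2 / 3 * ln x) + 3 / 2 * (2 / 3 * exp ((2 / 3 - 1) * ln x)))
      with (exp ((2 / 3 - 1) * ln x)) by field.
    f_equal. simpl INR. field.
Qed.

Lemma Dn_f0 k x : 0 < x -> Dn (S k) f0 x = ev 0 x (iterD k).
Proof.
  intros Hx. rewrite Dn_S.
  apply Dn_chain with (U := fun x => 0 < x) (g := fun n y => ev 0 y (iterD n)); auto.
  - intros y Hy. exists y; split; auto. intros z Hz. apply Rabs_def2 in Hz. lra.
  - intros y Hy. apply Deriv_eq, D_f0; auto.
  - intros n y Hy. apply ev_deriv; auto. nra. rewrite LL0; auto. nra.
Qed.

Lemma LL_pos dl ep x : 0 < dl <= 1 -> 0 < ep < dl^2/32 -> dl/2 < x < 2 -> ep < x /\ 0 < LL ep x.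
Proof.
  intros Hd He Hx.
  assert (ep < dl/32) by nra.
  split; [lra|].
  assert (Hsq : ep^2 < x^2) by nra.
  pose proof (rr_sq _ _ Hsq). pose proof (rr_pos _ _ Hsq).
  assert (Hr : dl/4 <= rr ep x) by nra.
  assert (rr ep x <= x) by nra.
  assert (ln (x + rr ep x) <= 2).
  { apply Rle_trans with (ln 4). apply ln_le'; lra.
    replace 4 with (2*2) by ring. rewrite ln_mult by lra. pose proof ln2_lt1. lra. }
  pose proof (eplnep ep ltac:(nra)) as HE. pose proof (Rle_abs (-(ep^2 * ln ep))) as HE2. rewrite Rabs_Ropp in HE2.
  unfold LL.
  assert (x * rr ep x >= dl^2/8) by nra.
  assert (ep^2 * ln (x + rr ep x) <= ep^2 * 2) by (apply Rmult_le_compat_l; nra).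
  assert (ep^2 <= ep) by nra.
  nra.
Qed.

Lemma Dn_ft k t x dl : 0 < dl <= 1 -> 0 < Cmod t < dl^2/32 -> dl/2 < x < 2 ->
  Dn (S k) (ft t) x = ev (Cmod t) x (iterD k).
Proof.
  intros Hd He Hx. rewrite Dn_S.
  apply Dn_chain with (U := fun x => dl/2 < x < 2) (g := fun n y => ev (Cmod t) y (iterD n)); auto.
  - intros y Hy. exists (Rmin (y - dl/2) (2 - y)); split.
    + apply Rmin_pos; lra.
    + intros z Hz. pose proof (Rmin_l (y - dl/2) (2 - y)). pose proof (Rmin_r (y - dl/2) (2 - y)).
      apply Rabs_def2 in Hz. lra.
  - intros y Hy. destruct (LL_pos dl (Cmod t) y Hd He Hy). apply Deriv_eq, D_ft; auto; lra.
  - intros n y Hy. destruct (LL_pos dl (Cmod t) y Hd He Hy). apply ev_deriv; auto; nra.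
Qed.

Lemma part1 dl k : 0 < dl < 1 -> forall eps, 0 < eps -> exists eta, 0 < eta /\
  forall t : R * R, 0 < Cmod t < 1 -> Cmod t < eta ->
  forall s, dl <= s <= 1 -> Rabs (Dn k (ft t) s - Dn k f0 s) < eps.
Proof.
  intros Hd eps Heps. destruct k as [|k].
  - simpl.
    set (d0 := Rmin dl (Rpower (eps/4) (3/2))).
    assert (Hd0 : 0 < d0) by (apply Rmin_pos; [lra|unfold Rpower; apply exp_pos]).
    assert (Hd0l : d0 <= dl) by apply Rmin_l.
    assert (Hf0 : f0 d0 <= 3/2 * (eps/4)).
    { unfold f0. apply Rmult_le_compat_l; [lra|].
      replace (eps/4) with (Rpower (Rpower (eps/4) (3/2)) (2/3)).
      - apply Rle_Rpower_l; [lra|]. split; auto. apply Rmin_r.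
      - rewrite Rpower_mult. replace (3/2 * (2/3)) with 1 by field. apply Rpower_1; lra. }
    destruct (proj1 (UC_ev d0 (iterD 0) ltac:(lra)) (eps/2) ltac:(lra)) as [e [He P]].
    exists (Rmin e (d0^2/32)). split; [apply Rmin_pos; nra|].
    intros t Ht Hte s Hs.
    pose proof (Rmin_l e (d0^2/32)). pose proof (Rmin_r e (d0^2/32)).
    set (ep := Cmod t) in *.
    assert (Hep0 : ep < d0^2/32) by lra.
    assert (Hepd : ep < d0) by nra.
    assert (Hle : ft t s <= f0 s) by (apply ft_le_f0; fold ep; lra).
    assert (Hn0 : 0 <= ft t d0) by (apply ft_nonneg; fold ep; lra).
    rewrite Rabs_left1 by lra.
    destruct (Req_dec s d0) as [Es|Ns].
    + subst s. lra.
    + destruct (MVT_cor2 (fun x => ft t x - f0 x) (fun x => ev ep x e1 - ev 0 x e1) d0 s)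
        as [c [Hc Hc2]]; [lra| |].
      * intros c Hc. destruct (LL_pos d0 ep c ltac:(lra) ltac:(lra) ltac:(lra)).
        apply D_minus; [apply D_ft; fold ep; auto; lra| apply D_f0; lra].
      * specialize (P ep c ltac:(lra) ltac:(lra)). change (iterD 0) with e1 in P.
        assert (HM : Rabs ((ev ep c e1 - ev 0 c e1) * (s - d0)) < eps/2).
        { rewrite Rabs_mult, (Rabs_right (s - d0)) by lra.
          apply Rle_lt_trans with (Rabs (ev ep c e1 - ev 0 c e1) * 1); [|lra].
          apply Rmult_le_compat_l; [apply Rabs_pos|lra]. }
        rewrite <- Hc in HM. apply Rabs_def2 in HM. lra.
  - destruct (proj1 (UC_ev dl (iterD k) ltac:(lra)) eps Heps) as [e [He P]].
    exists (Rmin e (dl^2/32)). split; [apply Rmin_pos; nra|].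
    intros t Ht Hte s Hs.
    pose proof (Rmin_l e (dl^2/32)). pose proof (Rmin_r e (dl^2/32)).
    rewrite (Dn_ft k t s dl) by lra. rewrite Dn_f0 by lra.
    apply P; auto; lra.
Qed.

Lemma ratio a b m : 0 < m -> m <= Rabs b -> Rabs (a - b) < m/2 -> 1/2 <= a/b <= 2.
Proof.
  intros Hm Hb Hab.
  assert (bn : b <> 0) by (intro E; rewrite E, Rabs_R0 in Hb; lra).
  assert (HR : Rabs (a/b - 1) < 1/2).
  { replace (a/b - 1) with ((a - b) / b) by (field; auto).
    unfold Rdiv. rewrite Rabs_mult, Rabs_inv.
    apply Rmult_lt_reg_r with (Rabs b); [lra|].
    rewrite Rmult_assoc, Rinv_l by (apply Rabs_no_R0; auto). lra. }
  apply Rabs_def2 in HR. lra.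
Qed.

Lemma rp_ge x : 0 < x <= 1 -> x <= Rpower x (1/3).
Proof.
  intros Hx. unfold Rpower.
  assert (ln x <= 0).
  { destruct (Req_dec x 1) as [->|]; [rewrite ln_1; lra|].
    left; rewrite <- ln_1; apply ln_increasing; lra. }
  rewrite <- (exp_ln x) at 1 by lra.
  destruct (Req_dec (ln x) 0) as [E|E].
  - rewrite E. right; f_equal; ring.
  - left; apply exp_increasing; lra.
Qed.

Lemma f0_d1 s : 0 < s <= 1 -> s <= Dn 1 f0 s.
Proof.
  intros Hs. rewrite (Dn_f0 0 s) by lra. change (iterD 0) with e1. simpl.
  rewrite CC0, rr0 by lra.
  pose proof (rp_ge (s^2) ltac:(split; nra)).
  apply Rmult_le_reg_r with s; [lra|]. rewrite Rmult_assoc, Rinv_l by lra. nra.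
Qed.

Lemma f0_d2 s : 0 < s <= 1 -> 1/3 <= Rabs (Dn 2 f0 s).
Proof.
  intros Hs. rewrite (Dn_f0 1 s) by lra. change (iterD 1) with (Dx e1). simpl.
  rewrite rr0 by lra.
  pose proof (CC0 s ltac:(lra)) as HC.
  set (C := CC 0 s) in *.
  assert (HCp : 0 < C) by apply CC_pos.
  assert (E : s * s = C^3) by (rewrite HC, cube_rpow; [ring|nra]).
  assert (HC1 : C <= 1).
  { rewrite HC. replace 1 with (Rpower 1 (1/3)) at 2 by (unfold Rpower; rewrite ln_1, Rmult_0_r, exp_0; auto).
    apply Rle_Rpower_l; nra. }
  replace (C * (-1 * (s * (/ s * (/ s * / s))))) with (-(C * / (s*s))) by (field; lra).
  rewrite E.
  replace (2 / 3 * (s * (/ C * / C)) * / s + - (C * / C ^ 3)) with (-(1/3 * / (C*C))) by (field; lra).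
  rewrite Rabs_Ropp, Rabs_right.
  - apply Rmult_le_reg_r with (C*C); [nra|]. rewrite Rmult_assoc, Rinv_l by nra. nra.
  - apply Rle_ge, Rmult_le_pos; [lra|left; apply Rinv_0_lt_compat; nra].
Qed.

Theorem lemma3p2 :
  (forall (delta : R) (k : nat), 0 < delta < 1 ->
     forall eps : R, 0 < eps ->
     exists eta : R, 0 < eta /\
       forall t : R * R, 0 < Cmod t < 1 -> Cmod t < eta ->
       forall s : R, delta <= s <= 1 ->
         Rabs (Dn k (ft t) s - Dn k f0 s) < eps)
  /\
  (forall delta' : R, 0 < delta' ->
     exists alpha : R, 0 < alpha /\
       forall delta : R, delta' < delta < 1/4 ->
       forall t : R * R, 0 < Cmod t < 1 -> Cmod t < alpha ->
       forall s : R, delta' <= s <= delta ->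
         1/2 <= Dn 1 (ft t) s / Dn 1 f0 s <= 2 /\
         1/2 <= Dn 2 (ft t) s / Dn 2 f0 s <= 2).
Proof.
  split.
  - intros delta k Hd eps He. apply part1; auto.
  - intros dp Hdp. destruct (Rlt_dec dp (1/4)) as [Hlt|Hge].
    + destruct (part1 dp 1 ltac:(lra) (dp/2) ltac:(lra)) as [e1' [He1 P1]].
      destruct (part1 dp 2 ltac:(lra) (1/3/2) ltac:(lra)) as [e2 [He2 P2]].
      exists (Rmin e1' e2). split; [apply Rmin_pos; auto|].
      intros delta Hdel t Ht Hta s Hs.
      pose proof (Rmin_l e1' e2). pose proof (Rmin_r e1' e2).
      split.
      * apply ratio with dp; [lra| |apply P1; lra].
        pose proof (f0_d1 s ltac:(lra)). rewrite Rabs_right; lra.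
      * apply ratio with (1/3); [lra| apply f0_d2; lra|apply P2; lra].
    + exists 1. split; [lra|]. intros delta Hdel. lra.
Qed.
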